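(* For any $n\ge2$ and any tropical curve $\Gamma$, the tropical rational function semifield $\overline{\boldsymbol{T}(X_1,\ldots,X_n)}$ is not isomorphic to $\operatorname{Rat}(\Gamma)$ as a $\boldsymbol{T}$-algebra.
   Context: $\boldsymbol{T}=\mathbb{R}\cup\{-\infty\}$ with $a\oplus b=\max\{a,b\}$, $a\odot b=a+b$. $\overline{\boldsymbol{T}[X_1,\ldots,X_n]}$ is the tropical polynomial semiring modulo identifying polynomials defining the same function $\boldsymbol{T}^n\to\boldsymbol{T}$; it is cancellative and $\overline{\boldsymbol{T}(X_1,\ldots,X_n)}$ is its semifield of fractions. $\boldsymbol{T}$-algebras are semirings with a semiring homomorphism from $\boldsymbol{T}$; an isomorphism is a bijective compatible semiring homomorphism. A tropical curve is the metric space obtained from a finite connected multigraph with edge lengths in $\mathbb{R}_{>0}\cup\{\infty\}$ ($\infty$ only on leaf edges, whose leaf end becomes a point at infinity) by identifying each edge with a closed interval of that length. A rational function on $\Gamma$ is the constant $-\infty$ or a continuous piecewise affine function $\Gamma\to\mathbb{R}\cup\{\pm\infty\}$ with integer slopes and finitely many pieces, taking $\pm\infty$ only at points at infinity. $\operatorname{Rat}(\Gamma)$, with pointwise max and sum, is a $\boldsymbol{T}$-algebra via constants. *)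

(* Defs.v *)
From Stdlib Require Import Reals ZArith.
From mathcomp Require Import ssreflect ssrfun ssrbool eqtype ssrnat seq choice fintype fingraph.

Set Implicit Arguments.
Unset Strict Implicit.
Unset Printing Implicit Defensive.

(* The tropical semifield T = R u {-oo}, with None = -oo.              *)
Definition T := option R.

Definition tadd (a b : T) : T :=
  match a, b with
  | None, _ => b
  | _, None => a
  | Some x, Some y => Some (Rmax x y)
  end.

Definition tmul (a b : T) : T :=
  match a, b with
  | Some x, Some y => Some (x + y)%R
  | _, _ => None
  end.

(* tropical power a^k (a^0 = 1 = 0 for every a, including -oo) *)
Definition tpow (a : T) (k : nat) : T :=
  match k with
  | 0 => Some 0%R
  | _ => match a with None => None | Some x => Some (INR k * x)%R end
  end.

(* Generic T-algebras presented as setoids: a carrier, a predicate of  *)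
(* admissible elements, an equality (equivalence) on them, the two     *)
(* operations and the structure map T -> A.                           *)
Record Talg := {
  car : Type;
  ok  : car -> Prop;
  eqv : car -> car -> Prop;
  alg_add : car -> car -> car;
  alg_mul : car -> car -> car;
  alg_cst : T -> car
}.

(* Preservation of 0 and 1 follows
   from compatibility with T (0 = cst(-oo), 1 = cst(0)). *)
Definition Talg_iso (A B : Talg) : Prop :=
  exists phi : car A -> car B,
    (forall x, @ok A x -> @ok B (phi x)) /\
    (forall x y, @ok A x -> @ok A y -> (@eqv A x y <-> @eqv B (phi x) (phi y))) /\
    (forall y, @ok B y -> exists x, @ok A x /\ @eqv B (phi x) y) /\
    (forall x y, @ok A x -> @ok A y ->
       @eqv B (phi (@alg_add A x y)) (@alg_add B (phi x) (phi y))) /\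
    (forall x y, @ok A x -> @ok A y ->
       @eqv B (phi (@alg_mul A x y)) (@alg_mul B (phi x) (phi y))) /\
    (forall t, @eqv B (phi (@alg_cst A t)) (@alg_cst B t)).

(* a monomial  c (.) X^alpha  *)
Definition monom (n : nat) := (T * ('I_n -> nat))%type.
Definition tpoly (n : nat) := seq (monom n).

Definition meval n (m : monom n) (x : 'I_n -> T) : T :=
  foldr (fun j acc => tmul (tpow (x j) (m.2 j)) acc) m.1 (enum 'I_n).

Definition peval n (p : tpoly n) (x : 'I_n -> T) : T :=
  foldr (fun m acc => tadd (meval m x) acc) None p.

Definition padd n (p q : tpoly n) : tpoly n := p ++ q.
Definition pmul n (p q : tpoly n) : tpoly n :=
  [seq (tmul m.1 m'.1, fun j => (m.2 j + m'.2 j)%N) | m <- p, m' <- q].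

(* elements of the fraction semifield: pairs f / g with g <> -oo in
   the quotient T[X]/~ (i.e. g does not define the constant -oo). *)
Definition frac (n : nat) := (tpoly n * tpoly n)%type.
Definition frac_ok n (f : frac n) : Prop :=
  ~ (forall x, peval f.2 x = None).
Definition frac_eqv n (f f' : frac n) : Prop :=
  forall x, tmul (peval f.1 x) (peval f'.2 x) = tmul (peval f'.1 x) (peval f.2 x).
Definition frac_add n (f f' : frac n) : frac n :=
  (padd (pmul f.1 f'.2) (pmul f'.1 f.2), pmul f.2 f'.2).
Definition frac_mul n (f f' : frac n) : frac n :=
  (pmul f.1 f'.1, pmul f.2 f'.2).
Definition frac_cst n (t : T) : frac n :=
  ([:: (t, fun _ => 0%N)], [:: (Some 0%R, fun _ => 0%N)]).

Definition TratFun (n : nat) : Talg :=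
  {| car := frac n; ok := @frac_ok n; eqv := @frac_eqv n;
     alg_add := @frac_add n; alg_mul := @frac_mul n; alg_cst := @frac_cst n |}.

(* A finite multigraph (loops and multiple edges allowed) with vertex *)
(* type V and edge type E; edge e goes from src e to tgt e, and is    *)
(* identified with [0, len e] (parameter t = distance from src e).    *)
(* len e = None means length oo; then tgt e must be a leaf and it is   *)
(* the point at infinity, the edge being [0, oo].                     *)
Record curve (V E : finType) := {
  src : E -> V;
  tgt : E -> V;
  len : E -> option R
}.

Definition adjacent (V E : finType) (G : curve V E) : rel V :=
  fun a b => [exists e, ((src G e == a) && (tgt G e == b))
                     || ((src G e == b) && (tgt G e == a))].

Definition degree (V E : finType) (G : curve V E) (w : V) : nat :=
  (#|[pred e | src G e == w]| + #|[pred e | tgt G e == w]|)%N.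

Definition is_tropical_curve (V E : finType) (G : curve V E) : Prop :=
  (0 < #|V|)%N /\
  (forall a b, connect (adjacent G) a b) /\
  (forall e l, len G e = Some l -> (0 < l)%R) /\
  (forall e, len G e = None -> degree G (tgt G e) = 1%N).

Definition at_infinity (V E : finType) (G : curve V E) (w : V) : Prop :=
  exists e, len G e = None /\ tgt G e = w.

Definition pw_affine (a b : R) (f : R -> R) : Prop :=
  exists (k : nat) (pt : nat -> R) (s : nat -> Z) (c : nat -> R),
    pt 0%N = a /\ pt k = b /\
    (forall i, (i < k)%N -> (pt i < pt i.+1)%R) /\
    (forall i t, (i < k)%N -> (pt i <= t <= pt i.+1)%R ->
        f t = (c i + IZR (s i) * t)%R).

(* Candidate rational functions on Gamma: either the constant -oo, or
   the data of the (real) values at the vertices that are not points at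
   infinity and of the (real) values along each edge, t |-> fe e t for
   t in [0, len e] (resp. [0, oo)).  The value at a point at infinity
   is forced by continuity (the limit along its edge, in R u {+-oo}),
   so it is not stored. *)
Inductive ratfun (V E : finType) :=
  | RNinf
  | RFun of (V -> R) & (E -> R -> R).
Arguments RNinf {V E}.
Arguments RFun {V E}.

Definition is_rat (V E : finType) (G : curve V E) (f : ratfun V E) : Prop :=
  match f with
  | RNinf => True
  | RFun fv fe =>
      (forall e, fe e 0%R = fv (src G e)) /\
      (forall e l, len G e = Some l -> fe e l = fv (tgt G e) /\ pw_affine 0 l (fe e)) /\
      (forall e, len G e = None ->
         exists L, (0 <= L)%R /\ pw_affine 0 L (fe e) /\
           exists (s : Z) (c : R), forall t, (L <= t)%R -> fe e t = (c + IZR s * t)%R)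
  end.

Definition rat_eqv (V E : finType) (G : curve V E) (f g : ratfun V E) : Prop :=
  match f, g with
  | RNinf, RNinf => True
  | RFun fv fe, RFun gv ge =>
      (forall w, ~ at_infinity G w -> fv w = gv w) /\
      (forall e t, (0 <= t)%R -> (forall l, len G e = Some l -> (t <= l)%R) ->
         fe e t = ge e t)
  | _, _ => False
  end.

Definition rat_add (V E : finType) (f g : ratfun V E) : ratfun V E :=
  match f, g with
  | RNinf, _ => g
  | _, RNinf => f
  | RFun fv fe, RFun gv ge =>
      RFun (fun w => Rmax (fv w) (gv w)) (fun e t => Rmax (fe e t) (ge e t))
  end.

Definition rat_mul (V E : finType) (f g : ratfun V E) : ratfun V E :=
  match f, g with
  | RFun fv fe, RFun gv ge =>
      RFun (fun w => (fv w + gv w)%R) (fun e t => (fe e t + ge e t)%R)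
  | _, _ => RNinf
  end.

Definition rat_cst (V E : finType) (t : T) : ratfun V E :=
  match t with
  | None => RNinf
  | Some r => RFun (fun _ => r) (fun _ _ => r)
  end.

Definition Rat (V E : finType) (G : curve V E) : Talg :=
  {| car := ratfun V E; ok := @is_rat V E G; eqv := @rat_eqv V E G;
     alg_add := @rat_add V E; alg_mul := @rat_mul V E; alg_cst := @rat_cst V E |}.

(* Main.v *)
Require Import Defs.
From Stdlib Require Import Reals Lra Lia Psatz Classical ClassicalEpsilon.
From mathcomp Require Import ssreflect ssrfun ssrbool eqtype ssrnat seq choice fintype fingraph.
Set Implicit Arguments.
Unset Strict Implicit.
Unset Printing Implicit Defensive.
Local Open Scope R_scope.

Ltac rmx := unfold Rmax in *; repeat match goal with
  | |- context [Rle_dec ?a ?b] => destruct (Rle_dec a b)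
  | H : context [Rle_dec ?a ?b] |- _ => destruct (Rle_dec a b) end.

Ltac tb := simpl; try reflexivity; try (f_equal; rmx; lra).

Lemma tmulC a b : tmul a b = tmul b a.
Proof. destruct a, b; tb. Qed.
Lemma tmulA a b c : tmul a (tmul b c) = tmul (tmul a b) c.
Proof. destruct a, b, c; tb. Qed.
Lemma tmulCA a b c : tmul a (tmul b c) = tmul b (tmul a c).
Proof. destruct a, b, c; tb. Qed.
Lemma tmul1l a : tmul (Some 0) a = a.
Proof. destruct a; tb. Qed.
Lemma tmul1r a : tmul a (Some 0) = a.
Proof. destruct a; tb. Qed.
Lemma tmulNr a : tmul a None = None.
Proof. destruct a; tb. Qed.
Lemma taddNr a : tadd a None = a.
Proof. destruct a; tb. Qed.
Lemma taddA a b c : tadd a (tadd b c) = tadd (tadd a b) c.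
Proof. destruct a, b, c; tb. Qed.
Lemma tmulDr a b c : tmul a (tadd b c) = tadd (tmul a b) (tmul a c).
Proof. destruct a, b, c; tb. Qed.
Lemma tmulDl a b c : tmul (tadd b c) a = tadd (tmul b a) (tmul c a).
Proof. destruct a, b, c; tb. Qed.

Lemma INR_addn m k : INR (m + k)%N = INR m + INR k.
Proof. exact: plus_INR. Qed.

Lemma tpow_some a m : tpow (Some a) m = Some (INR m * a).
Proof. destruct m; simpl; [f_equal; ring | reflexivity]. Qed.

Lemma tpow_add a m k : tpow a (m + k) = tmul (tpow a m) (tpow a k).
Proof.
destruct a as [a|].
- rewrite !tpow_some /= INR_addn; f_equal; ring.
- case: m => [|m]; case: k => [|k]; rewrite ?add0n ?addn0 ?addSn /=; try reflexivity.
  f_equal; ring.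
Qed.

Lemma tid a b s t : tadd s a = a \/ tadd t b = b ->
  tmul (tmul (tadd s a) (tadd t b)) (tmul a b) =
  tmul (tadd (tmul (tadd s a) b) (tmul (tadd t b) a)) (tmul a b).
Proof.
destruct a, b, s, t; simpl; intros [H|H]; try discriminate; try reflexivity;
  try (injection H; clear H; intro H); f_equal; rmx; lra.
Qed.

Section Poly.
Variable n : nat.

Lemma peval_cat (p q : tpoly n) x : peval (p ++ q) x = tadd (peval p x) (peval q x).
Proof. elim: p => [|a p IH] //=. by rewrite IH taddA. Qed.

Lemma foldr_mul2 (s : seq 'I_n) (x : 'I_n -> T) (A B : 'I_n -> nat) c d :
  foldr (fun j acc => tmul (tpow (x j) (A j + B j)) acc) (tmul c d) s =
  tmul (foldr (fun j acc => tmul (tpow (x j) (A j)) acc) c s)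
       (foldr (fun j acc => tmul (tpow (x j) (B j)) acc) d s).
Proof.
elim: s => [|j s IH] //=. rewrite IH tpow_add.
rewrite -!tmulA; f_equal. by rewrite tmulCA.
Qed.

Lemma peval_pmul (p q : tpoly n) x : peval (pmul p q) x = tmul (peval p x) (peval q x).
Proof.
elim: p => [|m p IH] /=; first by [].
rewrite /pmul /= peval_cat -/(pmul p q) IH tmulDl.
f_equal. clear IH.
elim: q => [|m' q IHq] /=; first by rewrite tmulNr.
rewrite IHq tmulDr; f_equal.
rewrite /meval /=. apply: foldr_mul2.
Qed.
End Poly.




Lemma tpow0 a : tpow a 0 = Some 0. Proof. by []. Qed.

Section P2.
Variable n : nat.
Variables j0 j1 : 'I_n.
Hypothesis h0 : val j0 = 0%N.
Hypothesis h1 : val j1 = 1%N.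

Definition ex (a b : nat) : 'I_n -> nat :=
  fun j => if val j == 0%N then a else if val j == 1%N then b else 0%N.
Definition mon a b : monom n := (Some 0, ex a b).
Definition Dp k : tpoly n := [:: mon 0 2; mon (k + k).+1 0].
Definition Np k : tpoly n := mon k.+1 1 :: Dp k.
Definition Fk k : frac n := (Np k, Dp k).

Definition dT k u v := tadd (tpow v 2) (tpow u (k + k).+1).
Definition nT k u v := tadd (tmul (tpow u k.+1) (tpow v 1)) (dT k u v).

Lemma foldr_two (s : seq 'I_n) (P : 'I_n -> T) base :
  j0 != j1 -> uniq s -> (forall j, j != j0 -> j != j1 -> P j = Some 0) ->
  foldr (fun j acc => tmul (P j) acc) base s =
  tmul base (tmul (if j0 \in s then P j0 else Some 0) (if j1 \in s then P j1 else Some 0)).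
Proof.
move=> n01; elim: s => [|j s IH].
  by move=> _ _ /=; rewrite Rplus_0_r tmul1r.
move=> /=.
case/andP => js us HP; rewrite IH // !in_cons.
case: (eqVneq j0 j) => [e0|ne0].
  subst j. rewrite (negbTE js) orTb eq_sym (negbTE n01) orFb tmul1l tmulCA. done.
case: (eqVneq j1 j) => [e1|ne1].
  subst j. rewrite (negbTE js) tmul1r tmulCA. f_equal. by rewrite tmulC.
rewrite HP ?tmul1l //; by rewrite eq_sym.
Qed.

Lemma n01 : j0 != j1.
Proof. apply/eqP => h; have := congr1 val h; rewrite h0 h1. done. Qed.

Lemma meval_mon x a b : meval (mon a b) x = tmul (tpow (x j0) a) (tpow (x j1) b).
Proof.
rewrite /meval /= (foldr_two _ n01 (enum_uniq _)).
- rewrite !mem_enum tmul1l /ex h0 h1 /=. done.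
- move=> j nj0 nj1; rewrite /ex.
  have -> : (val j == 0%N) = false.
    apply/negbTE; apply: contra nj0 => /eqP hj; apply/eqP; apply: val_inj; by rewrite /= hj h0.
  have -> : (val j == 1%N) = false.
    apply/negbTE; apply: contra nj1 => /eqP hj; apply/eqP; apply: val_inj; by rewrite /= hj h1.
  done.
Qed.

Lemma peval_D k x : peval (Dp k) x = dT k (x j0) (x j1).
Proof. rewrite /= !meval_mon !tpow0 taddNr tmul1l tmul1r. done. Qed.

Lemma peval_N k x : peval (Np k) x = nT k (x j0) (x j1).
Proof. rewrite /= !meval_mon !tpow0 taddNr tmul1l tmul1r. done. Qed.

Lemma meval_cst (x : 'I_n -> T) c : meval (c, fun _ => 0%N) x = c.
Proof. rewrite /meval /=; elim: (enum 'I_n) => // j s IH. rewrite [LHS]/= IH. case: c {IH} => //= r; by rewrite Rplus_0_l. Qed.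
End P2.




Lemma sector_lt i j u v : (i < j)%N -> nT i u v = dT i u v \/ nT j u v = dT j u v.
Proof.
move=> hij.
case: u => [u|]; last by left; rewrite /nT /=.
case: v => [v|]; last by left; rewrite /nT tmulNr.
rewrite /nT /dT !tpow_some /=.
set Di := Rmax (INR 2 * v) (INR (i + i).+1 * u). set Dj := Rmax (INR 2 * v) (INR (j + j).+1 * u).
have hi := Rmax_l (INR 2 * v) (INR (i + i).+1 * u).
have hi' := Rmax_r (INR 2 * v) (INR (i + i).+1 * u).
have hj := Rmax_l (INR 2 * v) (INR (j + j).+1 * u).
have hj' := Rmax_r (INR 2 * v) (INR (j + j).+1 * u).
rewrite -/Di in hi hi'; rewrite -/Dj in hj hj'.
destruct (Rle_dec (INR i.+1 * u + INR 1 * v) Di) as [a|a].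
  by left; rewrite Rmax_right.
destruct (Rle_dec (INR j.+1 * u + INR 1 * v) Dj) as [b|b].
  by right; rewrite Rmax_right.
exfalso.
have Hij : INR i + 1 <= INR j.
  rewrite -S_INR; apply: le_INR; apply/ssrnat.leP; exact: hij.
have Hi0 := pos_INR i.
rewrite !S_INR !INR_addn /= in a b hi hi' hj hj'.
have u0 : 0 < u by nra.
have : 0 <= (INR j - INR i - 1) * u by apply: Rmult_le_pos; lra.
nra.
Qed.

Lemma sector i j u v : i <> j -> nT i u v = dT i u v \/ nT j u v = dT j u v.
Proof.
move=> hij; case: (ltngtP i j) => h.
- exact: sector_lt.
- by case: (sector_lt u v h) => H; [right|left].
- by [].
Qed.




Section P3.
Variable n : nat.
Variables j0 j1 : 'I_n.
Hypothesis h0 : val j0 = 0%N.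
Hypothesis h1 : val j1 = 1%N.

Definition x0 : 'I_n -> T := fun _ => Some 0.

Lemma Dsome k : exists r, peval (Dp n k) x0 = Some r.
Proof. rewrite (peval_D h0 h1) /dT !tpow_some /=; eexists; reflexivity. Qed.

Lemma onesome x : peval [:: (Some 0, fun _ : 'I_n => 0%N)] x = Some 0.
Proof. by rewrite /= meval_cst. Qed.

Lemma cpeval c x : peval [:: (c, fun _ : 'I_n => 0%N)] x = c.
Proof. by rewrite /= meval_cst taddNr. Qed.

Lemma okF k : frac_ok (Fk n k).
Proof. move=> H; have := H x0; case: (Dsome k) => r /= ->. done. Qed.

Lemma okC c : frac_ok (frac_cst n c).
Proof. move=> H; have := H x0; by rewrite onesome. Qed.

Lemma ok_addC k c : frac_ok (frac_add (Fk n k) (frac_cst n c)).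
Proof.
move=> H; have := H x0; rewrite peval_pmul onesome.
case: (Dsome k) => r /= ->. done.
Qed.

Lemma ok_mulF i j : frac_ok (frac_mul (Fk n i) (Fk n j)).
Proof.
move=> H; have := H x0; rewrite peval_pmul.
case: (Dsome i) => r /= ->; case: (Dsome j) => r' /= ->. done.
Qed.

Lemma ok_addF i j : frac_ok (frac_add (Fk n i) (Fk n j)).
Proof.
move=> H; have := H x0; rewrite peval_pmul.
case: (Dsome i) => r /= ->; case: (Dsome j) => r' /= ->. done.
Qed.

Lemma disjF i j : i <> j -> frac_eqv (frac_mul (Fk n i) (Fk n j)) (frac_add (Fk n i) (Fk n j)).
Proof.
move=> hij x; rewrite /padd !peval_pmul peval_cat !peval_pmul.
rewrite !(peval_N h0 h1) !(peval_D h0 h1).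
apply: tid. exact: sector.
Qed.

Lemma unbF k c : ~ frac_eqv (frac_add (Fk n k) (frac_cst n (Some c))) (frac_cst n (Some c)).
Proof.
move=> H.
set u := 2 * Rabs c + 2.
set v := (INR k + /2) * u.
pose xx : 'I_n -> T := fun j => if val j == 0%N then Some u else Some v.
have e0 : xx j0 = Some u by rewrite /xx h0.
have e1 : xx j1 = Some v by rewrite /xx h1.
have := H xx.
rewrite /padd peval_cat !peval_pmul !cpeval (peval_N h0 h1) (peval_D h0 h1) e0 e1.
rewrite /nT /dT !tpow_some !S_INR !INR_addn /= => [[]].
have ev : (0 + 1 + 1) * v = (INR k + INR k + 1) * u by rewrite /v; field.
have ex : (INR k + 1) * u + (0 + 1) * v = (INR k + INR k + 1) * u + u / 2 by rewrite /v; field.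
rewrite ev ex; set D := (INR k + INR k + 1) * u.
have ha := Rle_abs c.
have hu : u / 2 = Rabs c + 1 by rewrite /u; field.
move=> Heq; rmx; lra.
Qed.
End P3.




Lemma affine_bound p q c s t : p <= t <= q ->
  c + IZR s * t <= Rmax (c + IZR s * p) (c + IZR s * q).
Proof.
move=> [h1 h2].
destruct (Rle_dec 0 (IZR s)) as [hs|hs].
- apply: Rle_trans (Rmax_r _ _). nra.
- apply: Rle_trans (Rmax_l _ _). nra.
Qed.

Lemma pw_bound a b f : pw_affine a b f -> exists M, forall t, a <= t <= b -> f t <= M.
Proof.
move=> [k [pt [s [c [H0 [Hk [Hinc Hpc]]]]]]]. subst a b.
suff: forall m, (m <= k)%N -> exists M, forall t, pt 0%N <= t <= pt m -> f t <= M.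
  by move=> /(_ k (leqnn k)).
elim=> [|m IH] hm.
  exists (f (pt 0%N)) => t [h1 h2]. have -> : t = pt 0%N by lra. lra.
have [M HM] := IH (ltnW hm).
exists (Rmax M (Rmax (c m + IZR (s m) * pt m) (c m + IZR (s m) * pt m.+1))) => t [h1 h2].
destruct (Rle_dec t (pt m)) as [ht|ht].
- apply: Rle_trans (Rmax_l _ _); apply: HM; lra.
- apply: Rle_trans (Rmax_r _ _). rewrite (Hpc m t hm); last lra.
  apply: affine_bound; lra.
Qed.

Section RatSide.
Variables V E : finType.
Variable G : curve V E.

Lemma edge_dich fv fe (Hr : is_rat G (RFun fv fe)) e :
  (exists M, forall t, 0 <= t -> (forall l, len G e = Some l -> t <= l) -> fe e t <= M) \/
  (len G e = None /\ exists T0, forall t, T0 <= t -> 0 < fe e t).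
Proof.
case: Hr => [_ [Hfin Hinf]].
case hl: (len G e) => [l|].
- left. have [_ pw] := Hfin e l hl. have [M HM] := pw_bound pw.
  exists M => t h0 hl'; apply: HM; split; first lra. exact: hl'.
- have [L [hL [pw [s [c Htail]]]]] := Hinf e hl.
  have [M1 HM1] := pw_bound pw.
  destruct (Z.lt_ge_cases 0 s) as [hs|hs].
  + right; split => //.
    have hs1 : 1 <= IZR s by apply: IZR_le; lia.
    exists (Rmax L (Rabs c + 1)) => t ht.
    have hLt := Rle_trans _ _ _ (Rmax_l L (Rabs c + 1)) ht.
    have hct := Rle_trans _ _ _ (Rmax_r L (Rabs c + 1)) ht.
    rewrite Htail //. have := Rle_abs (-c). rewrite Rabs_Ropp => ha.
    have hc0 := Rabs_pos c. nra.
  + left. have hs0 : IZR s <= 0 by apply: IZR_le; lia.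
    exists (Rmax M1 (c + IZR s * L)) => t h0 _.
    destruct (Rle_dec t L) as [ht|ht].
    * apply: Rle_trans (Rmax_l _ _); apply: HM1; lra.
    * apply: Rle_trans (Rmax_r _ _). rewrite Htail; last lra. nra.
Qed.

Lemma fin_bound (X : finType) (P : X -> R -> Prop) :
  (forall x M M', P x M -> M <= M' -> P x M') ->
  (forall x, exists M, P x M) -> exists M, forall x, P x M.
Proof.
move=> mono H.
suff [M HM] : exists M, forall x, x \in enum X -> P x M.
  by exists M => x; apply: HM; rewrite mem_enum.
elim: (enum X) => [|a s [Ms HMs]].
  by exists 0 => x; rewrite in_nil.
have [Ma HMa] := H a.
exists (Rmax Ma Ms) => x; rewrite in_cons; case/orP => [/eqP ->|hx].
- apply: mono HMa (Rmax_l _ _).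
- apply: mono (HMs x hx) (Rmax_r _ _).
Qed.

Lemma unb_leg fv fe (Hr : is_rat G (RFun fv fe))
  (Hu : forall c, ~ rat_eqv G (rat_add (RFun fv fe) (@rat_cst V E (Some c))) (@rat_cst V E (Some c))) :
  exists e, len G e = None /\ exists T0, forall t, T0 <= t -> 0 < fe e t.
Proof.
apply: NNPP => Hn.
have [ME HME] : exists M, forall e, (forall t, 0 <= t -> (forall l, len G e = Some l -> t <= l) -> fe e t <= M).
  apply: (fin_bound (P := fun e M => forall t, 0 <= t -> (forall l, len G e = Some l -> t <= l) -> fe e t <= M)).
  - move=> e M M' HM hM t h0 hl; apply: Rle_trans (HM t h0 hl) hM.
  - move=> e; case: (edge_dich Hr e) => // h; exfalso; apply: Hn; by exists e.
have [MV HMV] : exists M, forall w, fv w <= M.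
  apply: (fin_bound (P := fun w M => fv w <= M)).
  - move=> w M M' h1 h2; lra.
  - move=> w; exists (fv w); lra.
apply: (Hu (Rmax ME MV)); simpl; split.
- move=> w _; apply: Rmax_right; apply: Rle_trans (HMV w) (Rmax_r _ _).
- move=> e t h0 hl; apply: Rmax_right; apply: Rle_trans (HME e t h0 hl) (Rmax_l _ _).
Qed.

Definition gfe (f : ratfun V E) : E -> R -> R :=
  match f with RFun _ fe => fe | RNinf => fun _ _ => 0 end.

Lemma rat_side (g : nat -> ratfun V E) (Hok : forall k, is_rat G (g k))
  (Hu : forall k c, ~ rat_eqv G (rat_add (g k) (@rat_cst V E (Some c))) (@rat_cst V E (Some c)))
  (Hd : forall i j, i <> j -> rat_eqv G (rat_mul (g i) (g j)) (rat_add (g i) (g j))) : False.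
Proof.
have Hleg : forall k : 'I_(#|E|.+1), exists e, len G e = None /\
    exists T0, forall t, T0 <= t -> 0 < gfe (g k) e t.
  move=> k. move: (Hok k) (Hu k). case: (g k) => [|fv fe] /= hr hu.
  - exfalso; apply: (hu 0); simpl; split => //.
  - exact: unb_leg hr hu.
pose h (k : 'I_(#|E|.+1)) : E := proj1_sig (constructive_indefinite_description _ (Hleg k)).
have Hh : forall k, len G (h k) = None /\ exists T0, forall t, T0 <= t -> 0 < gfe (g k) (h k) t.
  move=> k; exact: (proj2_sig (constructive_indefinite_description _ (Hleg k))).
destruct (classic (injective h)) as [inj|ninj].
  have := leq_card h inj. by rewrite card_ord ltnn.
have [i Hi] := not_all_ex_not _ _ ninj.
have [j Hj] := not_all_ex_not _ _ Hi.
have [hij nij] := imply_to_and _ _ Hj.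
have [hl [T1 H1]] := Hh i.
have [_ [T2 H2]] := Hh j.
rewrite -hij in H2.
set t := Rmax (Rmax T1 T2) 0.
have p1 := H1 t (Rle_trans _ _ _ (Rmax_l _ _) (Rmax_l _ _)).
have p2 := H2 t (Rle_trans _ _ _ (Rmax_r _ _) (Rmax_l _ _)).
have nij' : (i : nat) <> j by move=> e; apply: nij; apply: val_inj.
move: (Hd _ _ nij') p1 p2.
case: (g i) => [|fv1 fe1]; case: (g j) => [|fv2 fe2] /=; try lra.
move=> [_ He] q1 q2.
have := He (h i) t (Rmax_r _ _) (fun l hl' => ltac:(rewrite hl in hl'; discriminate)).
rmx; lra.
Qed.
End RatSide.


Local Close Scope R_scope.


Section Req.
Variables V E : finType.
Variable G : curve V E.
Lemma req_refl f : rat_eqv G f f.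
Proof. by case: f => //= fv fe; split. Qed.
Lemma req_sym f g : rat_eqv G f g -> rat_eqv G g f.
Proof.
case: f => [|fv fe]; case: g => [|gv ge] //= [a b]; split=> *; [rewrite a | rewrite b] => //.
Qed.
Lemma req_trans f g h : rat_eqv G f g -> rat_eqv G g h -> rat_eqv G f h.
Proof.
case: f => [|fv fe]; case: g => [|gv ge]; case: h => [|hv he] //= [a b] [c d]; split=> *.
- by rewrite a // c.
- by rewrite b // d.
Qed.
Lemma req_add f f' g g' : rat_eqv G f f' -> rat_eqv G g g' -> rat_eqv G (rat_add f g) (rat_add f' g').
Proof.
case: f => [|fv fe]; case: f' => [|fv' fe']; case: g => [|gv ge]; case: g' => [|gv' ge'] //=.
move=> [a b] [c d]; split=> *; [by rewrite a // c | by rewrite b // d].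
Qed.
End Req.

Theorem corollary3p13 (n : nat) (hn : (2 <= n)%N)
  (V E : finType) (G : curve V E) (hG : is_tropical_curve G) :
  ~ Talg_iso (TratFun n) (Rat G).
Proof.
case=> phi [Hok [Heqv [_ [Hadd [Hmul Hcst]]]]].
simpl in *.
pose j0 : 'I_n := Ordinal (ltnW hn).
pose j1 : 'I_n := Ordinal hn.
have h0 : val j0 = 0%N by [].
have h1 : val j1 = 1%N by [].
apply: (@rat_side V E G (fun k => phi (Fk n k))).
- move=> k; apply: Hok; exact: (okF (k:=k) h0 h1).
- move=> k c H. apply: (unbF (k := k) (c := c) h0 h1).
  apply/Heqv; [exact: (ok_addC (k:=k) h0 h1) | exact: okC |].
  have X := Hadd _ _ (okF (k:=k) h0 h1) (okC (c:=Some c)). refine (req_trans X _).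
  apply: req_trans (req_add (req_refl _ _) (Hcst (Some c))) _.
  apply: req_trans H _.
  exact: req_sym (Hcst (Some c)).
- move=> i j hij.
  have Ed := disjF h0 h1 hij.
  have E' := (proj1 (Heqv _ _ (ok_mulF (i:=i) (j:=j) h0 h1) (ok_addF (i:=i) (j:=j) h0 h1)) Ed).
  apply: req_trans (req_sym (Hmul _ _ (okF (k:=i) h0 h1) (okF (k:=j) h0 h1))) _.
  apply: req_trans E' _.
  exact: Hadd _ _ (okF (k:=i) h0 h1) (okF (k:=j) h0 h1).
Qed.
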